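(* Consider the model described in the context and suppose the Lipschitz assumption holds. Then for every $t\in\mathbb N_T$ there exists a constant $K_t>0$ such that for all $z_1,z_2\in\Delta(\mathcal X)$, $$|\hat V_t(z_1)-\hat V_t(z_2)|\le K_t\|z_1-z_2\|_\infty.$$
   Context: Let $T\in\mathbb N$, $\mathbb N_T=\{1,\dots,T\}$, and let $\mathcal X,\mathcal U,\mathcal W$ be finite sets. Let $\mathcal I(\mathcal X)=[0,1]^{\mathcal X}$ and $\Delta(\mathcal X)$ the set of probability vectors on $\mathcal X$. For each $t$ let $f_t:\mathcal X\times\mathcal U\times\mathcal W\times\mathcal I(\mathcal X)\to\mathcal X$, let $\mathbb P(w_t=\cdot)$ be a probability law on $\mathcal W$, and define transition probabilities $\mathbb P(y\mid x,u,z)=\sum_{w\in\mathcal W}\mathbb 1(f_t(x,u,w,z)=y)\,\mathbb P(w_t=w)$; let $\ell_t:\mathcal X\times\mathcal U\times\mathcal I(\mathcal X)\to\mathbb R_{\ge0}$ be cost functions. Lipschitz assumption: there exist $K^1_t,K^2_t>0$ with $|\mathbb P(y|x,u,z_1)-\mathbb P(y|x,u,z_2)|\le K^1_t\|z_1-z_2\|_\infty$ and $|\ell_t(x,u,z_1)-\ell_t(x,u,z_2)|\le K^2_t\|z_1-z_2\|_\infty$ for all $x,y,u$ and $z_1,z_2\in\mathcal I(\mathcal X)$. $\mathcal G$ is the set of all maps $\gamma:\mathcal X\to\mathcal U$. Define $\hat f_t(z,\gamma)(y)=\sum_x z(x)\mathbb P(y|x,\gamma(x),z)$, $\hat c_t(z,\gamma)=\sum_x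 z(x)\ell_t(x,\gamma(x),z)$, and $\hat V_t:\Delta(\mathcal X)\to\mathbb R$ by $\hat V_{T+1}\equiv0$, $\hat V_t(z)=\min_{\gamma\in\mathcal G}\big(\hat c_t(z,\gamma)+\hat V_{t+1}(\hat f_t(z,\gamma))\big)$, $t=T,\dots,1$. *)

(* Defs.v *)
From HB Require Import structures.
From mathcomp Require Import all_boot all_order all_algebra.
From mathcomp Require Import reals.
Set Implicit Arguments. Unset Strict Implicit. Unset Printing Implicit Defensive.
Import Order.TTheory GRing.Theory Num.Theory.
Local Open Scope ring_scope.

Section Model.
Variables (R : realType) (X U W : finType).

Definition supnorm (z : X -> R) : R := \big[Num.max/0]_(x : X) `|z x|.

Definition inI (z : X -> R) : Prop := forall x, 0 <= z x <= 1.

Definition inDelta (z : X -> R) : Prop :=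
  (forall x, 0 <= z x) /\ \sum_(x : X) z x = 1.

Definition is_law (p : W -> R) : Prop :=
  (forall w, 0 <= p w) /\ \sum_(w : W) p w = 1.

Variables (f : nat -> X -> U -> W -> (X -> R) -> X)
          (Pw : nat -> W -> R)
          (ell : nat -> X -> U -> (X -> R) -> R).

(* P(y | x, u, z) at time t *)
Definition trans (t : nat) (y x : X) (u : U) (z : X -> R) : R :=
  \sum_(w : W) (f t x u w z == y)%:R * Pw t w.

Definition fhat (t : nat) (z : X -> R) (g : {ffun X -> U}) : X -> R :=
  fun y => \sum_(x : X) z x * trans t y x (g x) z.

Definition chat (t : nat) (z : X -> R) (g : {ffun X -> U}) : R :=
  \sum_(x : X) z x * ell t x (g x) z.

Definition minG (F : {ffun X -> U} -> R) : R :=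
  match [pick g : {ffun X -> U}] with
  | Some g0 => \big[Num.min/F g0]_(g : {ffun X -> U}) F g
  | None => 0
  end.

(* Vaux n t z : value with n stages left starting at stage t *)
Fixpoint Vaux (n t : nat) (z : X -> R) : R :=
  match n with
  | 0 => 0
  | n'.+1 => minG (fun g => chat t z g + Vaux n' t.+1 (fhat t z g))
  end.

(* hat V_t for t = 1..T+1, with hat V_{T+1} = 0 *)
Definition Vhat (T t : nat) (z : X -> R) : R := Vaux (T.+1 - t) t z.

End Model.

(* Main.v *)
Require Import Defs.
From HB Require Import structures.
From mathcomp Require Import all_boot all_order all_algebra.
From mathcomp Require Import reals.
From mathcomp Require Import ring lra zify.
Import Order.TTheory GRing.Theory Num.Theory.
Local Open Scope ring_scope.
Set Implicit Arguments. Unset Strict Implicit.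

Section Aux.
Variables (R : realType) (X U : finType).

Lemma supnorm_ge0 (d : X -> R) : 0 <= supnorm d.
Proof. by rewrite /supnorm; elim/big_ind: _ => // a b Ha Hb; rewrite le_max Ha. Qed.

Lemma supnorm_ge (d : X -> R) x : `|d x| <= supnorm d.
Proof. by rewrite /supnorm (bigD1 x) //= le_max lexx. Qed.

Lemma supnorm_le (d : X -> R) c : 0 <= c -> (forall x, `|d x| <= c) -> supnorm d <= c.
Proof. by move=> c0 H; apply: bigmax_le. Qed.

Lemma minG_le (F : {ffun X -> U} -> R) g : minG F <= F g.
Proof.
rewrite /minG; case: pickP => [g0 _|H]; last by have := H g.
by rewrite (bigD1 g) //= ge_min lexx.
Qed.
Lemma dummy : True.
Proof. done.
Qed.

Lemma minG_lip_half (F G : {ffun X -> U} -> R) c : 0 <= c ->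
  (forall g, `|F g - G g| <= c) -> minG F - c <= minG G.
Proof.
move=> c0 H.
have HFG g : minG F - c <= G g.
  have := minG_le F g; have := H g; rewrite ler_norml => /andP[_ h2] h3.
  by rewrite lerBlDr; apply: le_trans h3 _; rewrite -lerBlDl.
rewrite {2}/minG; case: pickP => [g0 _|H0].
  by apply: le_bigmin => // i _; apply: HFG.
rewrite /minG; case: pickP => [g0 _|_]; first by have := H0 g0.
by rewrite sub0r oppr_le0.
Qed.
End Aux.

Section Key.
Variables (R : realType) (X : finType).

Lemma Delta_le1 (z : X -> R) x : inDelta z -> z x <= 1.
Proof.
move=> [H0 H1]; rewrite -H1 (bigD1 x) //= lerDl; exact: sumr_ge0.
Qed.

Lemma Delta_I (z : X -> R) : inDelta z -> inI z.
Proof. by move=> Hz x; rewrite Delta_le1 // andbT; case: Hz. Qed.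

Lemma key_est (z1 z2 a b : X -> R) (A B : R) :
  inDelta z1 -> inDelta z2 -> 0 <= A -> 0 <= B ->
  (forall x, `|a x| <= A) ->
  (forall x, `|a x - b x| <= B * supnorm (fun x => z1 x - z2 x)) ->
  `|\sum_x z1 x * a x - \sum_x z2 x * b x|
    <= (#|X|%:R * A + B) * supnorm (fun x => z1 x - z2 x).
Proof.
move=> H1 H2 A0 B0 Ha Hab; set s := supnorm _.
have s0 : 0 <= s by apply: supnorm_ge0.
have -> : \sum_x z1 x * a x - \sum_x z2 x * b x =
   \sum_x ((z1 x - z2 x) * a x + z2 x * (a x - b x)).
  by rewrite -sumrB; apply: eq_bigr => x _; rewrite mulrBl mulrBr addrA subrK.
apply: le_trans (ler_norm_sum _ _ _) _.
apply: (@le_trans _ _ (\sum_(x : X) (s * A + z2 x * (B * s)))).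

  apply: ler_sum => x _; apply: le_trans (ler_normD _ _) _.
  apply: lerD; rewrite normrM.
    apply: ler_pM => //; exact: supnorm_ge.
  case: H2 => H20 _; rewrite ger0_norm //; apply: ler_wpM2l => //.
rewrite big_split /= sumr_const -mulr_suml.
case: H2 => _ ->; rewrite -[_ *+ _]mulr_natl le_eqVlt; apply/orP; left; apply/eqP. ring.
Qed.
End Key.

Section Step.
Variables (R : realType) (X U W : finType)
  (f : nat -> X -> U -> W -> (X -> R) -> X)
  (Pw : nat -> W -> R)
  (ell : nat -> X -> U -> (X -> R) -> R) (t : nat).
Hypothesis law : is_law (Pw t).
Hypothesis hell : forall x u z, 0 <= ell t x u z.
Variables K1 K2 : R.
Hypothesis K10 : 0 < K1.
Hypothesis K20 : 0 < K2.
Hypothesis Htr : forall (x y : X) (u : U) (z1 z2 : X -> R), inI z1 -> inI z2 ->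
        `|trans f Pw t y x u z1 - trans f Pw t y x u z2|
          <= K1 * supnorm (fun x' => z1 x' - z2 x').
Hypothesis Hl : forall (x : X) (u : U) (z1 z2 : X -> R), inI z1 -> inI z2 ->
        `|ell t x u z1 - ell t x u z2|
          <= K2 * supnorm (fun x' => z1 x' - z2 x').

Lemma trans_ge0 y x u z : 0 <= trans f Pw t y x u z.
Proof.
apply: sumr_ge0 => w _; apply: mulr_ge0; first exact: ler0n.
by case: law.
Qed.

Lemma trans_le1 y x u z : trans f Pw t y x u z <= 1.
Proof.
case: law => L0 L1; rewrite -L1; apply: ler_sum => w _.
by apply: ler_piMl => //; case: eqP.
Qed.

Lemma sum_trans x u z : \sum_y trans f Pw t y x u z = 1.
Proof.
have [_ L1] := law; rewrite /trans exchange_big /= -[RHS]L1; apply: eq_bigr => w _.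
rewrite -mulr_suml (bigD1 (f t x u w z)) //= eqxx big1 ?addr0 ?mul1r //.
by move=> y /negbTE; rewrite eq_sym => ->.
Qed.

Lemma fhat_Delta z g : inDelta z -> inDelta (fhat f Pw t z g).
Proof.
move=> [Z0 Z1]; split.
  by move=> y; apply: sumr_ge0 => x _; apply: mulr_ge0 => //; apply: trans_ge0.
rewrite /fhat exchange_big /= -Z1; apply: eq_bigr => x _.
by rewrite -mulr_sumr sum_trans mulr1.
Qed.

Lemma fhat_lip z1 z2 g : inDelta z1 -> inDelta z2 ->
  supnorm (fun y => fhat f Pw t z1 g y - fhat f Pw t z2 g y)
   <= (#|X|%:R + K1) * supnorm (fun x => z1 x - z2 x).
Proof.
move=> H1 H2; apply: supnorm_le.
  by apply: mulr_ge0; [apply: addr_ge0 => //; apply: ltW | apply: supnorm_ge0].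
move=> y; rewrite -[#|X|%:R]mulr1; apply: key_est => //; try exact: ltW.
  by move=> x; rewrite ger0_norm ?trans_le1 ?trans_ge0.
by move=> x; apply: Htr; apply: Delta_I.
Qed.

Definition Mb : R := \sum_x \sum_u ell t x u (fun _ => 0) + K2.

Lemma ell_le_Mb x u z : inDelta z -> ell t x u z <= Mb.
Proof.
move=> Hz.
have I0 : inI (fun _ : X => (0:R)) by move=> ?; rewrite lexx ler01.
have := Hl x u (Delta_I Hz) I0; rewrite ler_distlC => /andP[h _]; move: h; rewrite lerBlDr => h.
apply: le_trans h _; rewrite /Mb; apply: lerD.
  rewrite (bigD1 x) //= (bigD1 u) //= -addrA lerDl.
  by apply: addr_ge0; apply: sumr_ge0 => ? _ //; apply: sumr_ge0.
rewrite ler_piMr //; first exact: ltW; apply: supnorm_le => // x'.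
by rewrite subr0 ger0_norm ?Delta_le1 //; case: Hz.
Qed.

Lemma Mb_ge0 : 0 <= Mb.
Proof. by apply: addr_ge0; [do 2 (apply: sumr_ge0 => ? _) | apply: ltW]. Qed.

Lemma chat_lip z1 z2 g : inDelta z1 -> inDelta z2 ->
  `|chat ell t z1 g - chat ell t z2 g|
   <= (#|X|%:R * Mb + K2) * supnorm (fun x => z1 x - z2 x).
Proof.
move=> H1 H2; apply: key_est => //; try exact: ltW; first exact: Mb_ge0.
  by move=> x; rewrite ger0_norm ?ell_le_Mb.
by move=> x; apply: Hl; apply: Delta_I.
Qed.
End Step.

Lemma minG_lip (R : realType) (X U : finType) (F G : {ffun X -> U} -> R) c : 0 <= c ->
  (forall g, `|F g - G g| <= c) -> `|minG F - minG G| <= c.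
Proof.
move=> c0 H; have h1 := minG_lip_half c0 H.
have h2 : minG G - c <= minG F by apply: minG_lip_half => // g; rewrite distrC.
rewrite ler_norml; apply/andP; split; lra.
Qed.

Unset Implicit Arguments. Set Strict Implicit.

Theorem proposition1 (R : realType) (T : nat) (X U W : finType)
  (f : nat -> X -> U -> W -> (X -> R) -> X)
  (Pw : nat -> W -> R)
  (ell : nat -> X -> U -> (X -> R) -> R)
  (HPw : forall t, (1 <= t <= T)%N -> is_law (Pw t))
  (Hell : forall t x u z, (1 <= t <= T)%N -> 0 <= ell t x u z)
  (HLip : forall t, (1 <= t <= T)%N ->
     exists K1 K2 : R, 0 < K1 /\ 0 < K2 /\
     (forall (x y : X) (u : U) (z1 z2 : X -> R), inI z1 -> inI z2 ->
        `|trans f Pw t y x u z1 - trans f Pw t y x u z2|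
          <= K1 * supnorm (fun x' => z1 x' - z2 x')) /\
     (forall (x : X) (u : U) (z1 z2 : X -> R), inI z1 -> inI z2 ->
        `|ell t x u z1 - ell t x u z2|
          <= K2 * supnorm (fun x' => z1 x' - z2 x'))) :
  forall t, (1 <= t <= T)%N ->
  exists K : R, 0 < K /\
    forall z1 z2 : X -> R, inDelta z1 -> inDelta z2 ->
      `|Vhat f Pw ell T t z1 - Vhat f Pw ell T t z2|
        <= K * supnorm (fun x => z1 x - z2 x).
Proof.
suff main : forall n t, (1 <= t)%N -> (t + n = T.+1)%N ->
  exists K : R, 0 < K /\
    forall z1 z2 : X -> R, inDelta z1 -> inDelta z2 ->
      `|Vaux f Pw ell n t z1 - Vaux f Pw ell n t z2|
        <= K * supnorm (fun x => z1 x - z2 x).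
  move=> t /andP[t1 tT]; apply: main => //; rewrite /Vhat; lia.
elim=> [|n IH] t t1 tn.
  exists 1; split => // z1 z2 _ _; rewrite /= subrr normr0 mul1r; exact: supnorm_ge0.
have tT : (1 <= t <= T)%N by apply/andP; split => //; lia.
have [K' [K'0 HK']] := IH t.+1 isT (etrans (addSnnS t n) tn).
have [K1 [K2 [K10 [K20 [Htr Hl]]]]] := HLip t tT.
have law := HPw t tT.
have hell : forall x u z, 0 <= ell t x u z by move=> x u z; exact: Hell.
set Mb' := Mb ell t K2.
have Mb0 : 0 <= Mb' := Mb_ge0 hell K20.
exists ((#|X|%:R * Mb' + K2) + K' * (#|X|%:R + K1)); split.
  have p1 : 0 <= #|X|%:R * Mb' by apply: mulr_ge0.
  have p2 : 0 < #|X|%:R + K1 by apply: ltr_wpDl.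
  have p3 : 0 < K' * (#|X|%:R + K1) by apply: mulr_gt0.
  lra.
move=> z1 z2 H1 H2 /=; set s := supnorm _.
have s0 : 0 <= s by apply: supnorm_ge0.
apply: minG_lip.
  apply: mulr_ge0 => //; apply: addr_ge0; first by apply: addr_ge0 => //; [apply: mulr_ge0 | apply: ltW].
  by apply: mulr_ge0; [apply: ltW | apply: addr_ge0 => //; apply: ltW].
move=> g.
have hc := chat_lip hell K20 Hl g H1 H2.
have hf := fhat_lip law K10 Htr g H1 H2.
have hv := HK' _ _ (fhat_Delta f law g H1) (fhat_Delta f law g H2).
have hv' : `|Vaux f Pw ell n t.+1 (fhat f Pw t z1 g) - Vaux f Pw ell n t.+1 (fhat f Pw t z2 g)|
   <= K' * ((#|X|%:R + K1) * s).
  by apply: le_trans hv _; rewrite ler_pM2l.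
apply: (@le_trans _ _ (`|chat ell t z1 g - chat ell t z2 g| + `|Vaux f Pw ell n t.+1 (fhat f Pw t z1 g) - Vaux f Pw ell n t.+1 (fhat f Pw t z2 g)|)).
  by rewrite opprD addrACA; apply: ler_normD.
rewrite mulrDl -mulrA; exact: lerD.
Qed.
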